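(* Let $D$ be a division ring which is finite dimensional over its central subfield $K=Z(D)$, let ${}_DM$ be a finite dimensional left vector space over $D$ and let $\varphi:M\to M$ be a nilpotent $D$-linear map. Then $C_\varphi=\{\psi\in\mathrm{Hom}_D(M,M)\mid\psi\circ\varphi=\varphi\circ\psi\}$ is a $K$-subspace of $\mathrm{Hom}_D(M,M)$ and \[\dim_K(C_\varphi)\le\dim_K(D)\cdot\dim_D(\ker(\varphi))\cdot\dim_D(M).\] *)

(* Defs.v *)
From HB Require Import structures.
From mathcomp Require Import all_boot all_order all_algebra.
Set Implicit Arguments. Unset Strict Implicit. Unset Printing Implicit Defensive.
Import GRing.Theory.
Local Open Scope ring_scope.

Definition division_ring (D : unitRingType) : Prop :=
  forall x : D, x != 0 -> x \is a GRing.unit.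

Definition central (D : pzRingType) (k : D) : Prop :=
  forall x : D, k * x = x * k.

(* Linear independence of a finite family s of vectors of a left R-module V,
   with coefficients restricted to the scalars satisfying S
   (S = everything: independence over R; S = central: over the center). *)
Definition lin_indep (R : pzRingType) (V : lmodType R) (S : R -> Prop)
    (s : seq V) : Prop :=
  forall c : seq R, size c = size s -> (forall i, (i < size s)%N -> S c`_i) ->
    \sum_(i < size s) c`_i *: s`_i = 0 ->
    forall i, (i < size s)%N -> c`_i = 0.

Definition has_dim (R : pzRingType) (V : lmodType R) (S : R -> Prop)
    (X : V -> Prop) (d : nat) : Prop :=
  (exists s : seq V, size s = d /\ (forall v, v \in s -> X v) /\ lin_indep S s) /\
  (forall s : seq V, (forall v, v \in s -> X v) -> lin_indep S s -> (size s <= d)%N).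

Definition lin_indep_fun (R : pzRingType) (M : lmodType R) (S : R -> Prop)
    (s : seq (M -> M)) : Prop :=
  forall c : seq R, size c = size s -> (forall i, (i < size s)%N -> S c`_i) ->
    (forall v : M, \sum_(i < size s) c`_i *: (nth (fun _ => 0) s i) v = 0) ->
    forall i, (i < size s)%N -> c`_i = 0.

Definition has_dim_fun (R : pzRingType) (M : lmodType R) (S : R -> Prop)
    (X : (M -> M) -> Prop) (d : nat) : Prop :=
  (exists s : seq (M -> M), size s = d /\
      (forall i, (i < size s)%N -> X (nth (fun _ => 0) s i)) /\ lin_indep_fun S s) /\
  (forall s : seq (M -> M), (forall i, (i < size s)%N -> X (nth (fun _ => 0) s i)) ->
      lin_indep_fun S s -> (size s <= d)%N).

Definition Dlinear (R : pzRingType) (M : lmodType R) (f : M -> M) : Prop :=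
  forall (a : R) (u v : M), f (a *: u + v) = a *: f u + f v.

Definition nilpotent_map (R : pzRingType) (M : lmodType R) (f : M -> M) : Prop :=
  exists k : nat, forall v : M, iter k f v = 0.

Definition centralizer_map (R : pzRingType) (M : lmodType R) (phi : M -> M)
    (psi : M -> M) : Prop :=
  Dlinear psi /\ (forall v, psi (phi v) = phi (psi v)).

(* Main.v *)
Require Import Defs.
From HB Require Import structures.
From mathcomp Require Import all_boot all_order all_algebra.
From Stdlib Require Import Classical IndefiniteDescription.
Set Implicit Arguments. Unset Strict Implicit. Unset Printing Implicit Defensive.
Import GRing.Theory.
Local Open Scope ring_scope.

Record sclosed (D : unitRingType) (S : D -> Prop) : Prop := SClosed {
  sc0 : S 0; sc1 : S 1;
  scB : forall x y, S x -> S y -> S (x - y);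
  scM : forall x y, S x -> S y -> S (x * y);
  scV : forall x, S x -> x != 0 -> x \is a GRing.unit /\ S x^-1 }.

Lemma scN (D : unitRingType) (S : D -> Prop) : sclosed S -> forall x, S x -> S (- x).
Proof. move=> hS x hx; rewrite -sub0r; exact: scB (sc0 hS) hx. Qed.

Lemma scD (D : unitRingType) (S : D -> Prop) : sclosed S -> forall x y, S x -> S y -> S (x + y).
Proof. move=> hS x y hx hy; rewrite -[y]opprK; exact: scB hx (scN hS hy). Qed.

Lemma scSum (D : unitRingType) (S : D -> Prop) (I : Type) (r : seq I) (F : I -> D) :
  sclosed S -> (forall i, S (F i)) -> S (\sum_(i <- r) F i).
Proof. move=> hS hF; apply: (big_ind S (sc0 hS) (scD hS)) => i _; exact: hF. Qed.

Lemma rows_le (D : unitRingType) (S : D -> Prop) : sclosed S ->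
  forall N s (a : 'I_s -> 'I_N -> D), (forall i j, S (a i j)) ->
  (forall c : 'I_s -> D, (forall i, S (c i)) -> (forall j, \sum_i c i * a i j = 0) ->
     forall i, c i = 0) -> (s <= N)%N.
Proof.
move=> hS; elim=> [|N IH] s a hSa hind.
  case: s a hSa hind => // s a hSa hind.
  have := hind (fun _ => 1) (fun _ => sc1 hS) (fun j => match j with Ordinal _ h => False_ind _ (notF h) end) ord0.
  by move/eqP; rewrite oner_eq0.
case: s a hSa hind => [//|s] a hSa hind.
case: (pickP (fun i => a i ord_max != 0)) => [i0 /= ha0|hnone].
  set al := a i0 ord_max.
  have [alU alS] := scV hS (hSa i0 ord_max) ha0.
  pose a' (k : 'I_s) (j : 'I_N) := a (lift i0 k) (widen_ord (leqnSn N) j)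
      - a (lift i0 k) ord_max * al^-1 * a i0 (widen_ord (leqnSn N) j).
  suff H : (s <= N)%N by exact H.
  refine (IH s a' _ _) => [k j|c' hc' hsum].
    by rewrite /a'; apply: (scB hS) => //; apply: (scM hS) => //; apply: (scM hS).
  pose c (i : 'I_s.+1) := if unlift i0 i is Some k then c' k
     else - \sum_k c' k * a (lift i0 k) ord_max * al^-1.
  have cl : forall k, c (lift i0 k) = c' k by move=> k; rewrite /c liftK.
  have c0 : c i0 = - \sum_k c' k * a (lift i0 k) ord_max * al^-1 by rewrite /c unlift_none.
  have hc : forall i, S (c i).
    move=> i; rewrite /c; case: (unlift i0 i) => [k|]; first exact: hc'.
    apply: (scN hS); apply: (@scSum _ _ _ _ _ hS) => k; apply: (scM hS) => //; apply: (scM hS) => //.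
  have := hind c hc.
  have key : forall j, \sum_i c i * a i j = c i0 * a i0 j + \sum_k c' k * a (lift i0 k) j.
    by move=> j; rewrite (bigD1_ord i0) //=; congr (_ + _); apply: eq_bigr => k _; rewrite cl.
  move=> H k; rewrite -cl; apply: H => j.
  rewrite key c0.
  case: (unliftP ord_max j) => [j'|] ->.
    have -> : lift ord_max j' = widen_ord (leqnSn N) j'.
      by apply: val_inj; rewrite /= /bump leqNgt ltn_ord.
    rewrite mulNr mulr_suml -sumrN -big_split /= -[RHS](hsum j').
    apply: eq_bigr => k1 _; rewrite /a' mulrBr !mulrA addrC.
    by [].
  rewrite mulNr mulr_suml -sumrN -big_split /=; apply: big1 => k1 _.
  by rewrite -!mulrA mulVr // mulr1 addNr.
have hz : forall i, a i ord_max = 0 by move=> i; move/negbT: (hnone i); rewrite negbK => /eqP.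
suff : (s.+1 <= N)%N by move=> h; apply: leq_trans h _.
apply: (IH _ (fun i j => a i (widen_ord (leqnSn N) j))) => [i j|c hc hsum]; first exact: hSa.
apply: hind => // j; case: (unliftP ord_max j) => [j'|] ->.
  have -> : lift ord_max j' = widen_ord (leqnSn N) j'.
    by apply: val_inj; rewrite /= /bump leqNgt ltn_ord.
  exact: hsum.
by apply: big1 => i _; rewrite hz mulr0.
Qed.

Lemma rows_le_fin (D : unitRingType) (S : D -> Prop) : sclosed S ->
  forall (J : finType) s (a : 'I_s -> J -> D), (forall i j, S (a i j)) ->
  (forall c : 'I_s -> D, (forall i, S (c i)) -> (forall j, \sum_i c i * a i j = 0) ->
     forall i, c i = 0) -> (s <= #|J|)%N.
Proof.
move=> hS J s a ha hind.
apply: (rows_le hS (a := fun i j => a i (enum_val j))) => [i j|c hc hsum]; first exact: ha.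
apply: hind => // j; rewrite -(enum_rankK j); exact: hsum.
Qed.

Definition span_coef (D : unitRingType) (V : lmodType D) (S : D -> Prop)
  (s : seq V) (x : V) (c : seq D) : Prop :=
  size c = size s /\ (forall i, (i < size s)%N -> S c`_i) /\
  x = \sum_(i < size s) c`_i *: s`_i.

Lemma indep_rcons (D : unitRingType) (V : lmodType D) (S : D -> Prop) (s : seq V) (x : V) :
  sclosed S -> lin_indep S s -> ~ (exists c, span_coef S s x c) -> lin_indep S (rcons s x).
Proof.
move=> hS hs hn c hc hSc hsum.
rewrite size_rcons in hc hSc hsum *.
rewrite big_ord_recr /= in hsum.
have e1 : forall i : 'I_(size s), (rcons s x)`_(widen_ord (leqnSn _) i) = s`_i.
  by move=> i; rewrite nth_rcons /= ltn_ord.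
have e2 : (rcons s x)`_(size s) = x by rewrite nth_rcons ltnn eqxx.
rewrite e2 in hsum.
move: hsum; under eq_bigr => i _ do rewrite e1.
move=> hsum.
set l := c`_(size s) in hsum.
case: (eqVneq l 0) => hl.
  rewrite hl scale0r addr0 in hsum.
  have hc' : size (take (size s) c) = size s by rewrite size_take hc ltnSn.
  have ht : forall i, (i < size s)%N -> (take (size s) c)`_i = c`_i.
    by move=> i hi; rewrite nth_take.
  have := hs (take (size s) c) hc'.
  have H1 : forall i, (i < size s)%N -> S (take (size s) c)`_i.
    by move=> i hi; rewrite ht //; apply: hSc; apply: ltnW.
  have H2 : \sum_(i < size s) (take (size s) c)`_i *: s`_i = 0.
    by rewrite -[RHS]hsum; apply: eq_bigr => i _; rewrite ht.
  move=> /(_ H1 H2) H i; rewrite ltnS leq_eqVlt => /orP [/eqP ->|hi]; first exact: hl.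
  by rewrite -ht // H.
exfalso; apply: hn.
have [lU lS] := scV hS (hSc (size s) (ltnSn _)) hl.
exists (mkseq (fun i => - (l^-1 * c`_i)) (size s)); split; first by rewrite size_mkseq.
split.
  move=> i hi; rewrite nth_mkseq //; apply: (scN hS); apply: (scM hS) => //.
  by apply: hSc; apply: ltnW.
have -> : \sum_(i < size s) (mkseq (fun i => - (l^-1 * c`_i)) (size s))`_i *: s`_i
   = - (l^-1 *: \sum_(i < size s) c`_i *: s`_i).
  rewrite scaler_sumr -sumrN; apply: eq_bigr => i _.
  by rewrite nth_mkseq // scalerA scaleNr.
move/eqP: hsum; rewrite addr_eq0 => /eqP hs2.
rewrite hs2.
by rewrite scalerN opprK scalerA mulVr // scale1r.
Qed.

Lemma dep_span (D : unitRingType) (V : lmodType D) (S : D -> Prop) (s : seq V) (x : V) :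
  sclosed S -> lin_indep S s -> ~ lin_indep S (rcons s x) -> exists c, span_coef S s x c.
Proof. move=> hS hs hn; apply: NNPP => H; exact: hn (indep_rcons hS hs H). Qed.

Lemma max_exists (P : nat -> Prop) n : P 0%N -> (forall k, P k -> (k <= n)%N) ->
  exists k, P k /\ forall k', P k' -> (k' <= k)%N.
Proof.
move=> h0 hb.
have : forall m, (exists k, P k /\ forall k', P k' -> (k' <= k)%N) \/ (exists k, P k /\ (m <= k)%N).
  elim=> [|m [L|[k [hk hmk]]]]; [by right; exists 0%N | by left |].
  case: (classic (exists k', P k' /\ (m.+1 <= k')%N)) => [R|hno]; first by right.
  left; exists k; split => // k' hk'.
  case: (leqP k' k) => // hlt; exfalso; apply: hno; exists k'; split => //.
  exact: leq_ltn_trans hmk hlt.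
move/(_ n.+1) => [//|[k [hk hk']]].
by have := hb k hk; rewrite leqNgt hk'.
Qed.

Lemma exists_basis (D : unitRingType) (V : lmodType D) (S : D -> Prop) (X : V -> Prop) n :
  sclosed S ->
  (forall s : seq V, (forall v, v \in s -> X v) -> lin_indep S s -> (size s <= n)%N) ->
  forall u, (forall v, v \in u -> X v) -> lin_indep S u ->
  exists t, (forall v, v \in u ++ t -> X v) /\ lin_indep S (u ++ t) /\
     forall x, X x -> exists c, span_coef S (u ++ t) x c.
Proof.
move=> hS hb u hu hiu.
pose P k := exists t : seq V, size t = k /\ (forall v, v \in u ++ t -> X v) /\ lin_indep S (u ++ t).
have [k [[t [hkt [htX hti]]] hmax]] : exists k, P k /\ forall k', P k' -> (k' <= k)%N.
  apply: (max_exists (n := n)).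
    by exists [::]; rewrite cats0.
  move=> k [t [<- [htX hti]]]; have := hb _ htX hti; rewrite size_cat => h.
  exact: leq_trans (leq_addl _ _) h.
exists t; split => //; split => // x hx.
apply: (dep_span hS hti) => hr.
have : P k.+1.
  exists (rcons t x); rewrite size_rcons hkt -rcons_cat; split => //; split => // v.
  by rewrite mem_rcons inE => /orP [/eqP ->|]; [|apply: htX].
by move/hmax; rewrite ltnn.
Qed.

Lemma fchoice (A B : Type) (P : A -> B -> Prop) :
  (forall a, exists b, P a b) -> exists f, forall a, P a (f a).
Proof.
move=> h; exists (fun a => proj1_sig (constructive_indefinite_description _ (h a))).
move=> a; exact: proj2_sig (constructive_indefinite_description _ (h a)).
Qed.

Lemma Dlin0 (D : unitRingType) (M : lmodType D) (f : M -> M) : Dlinear f -> f 0 = 0.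
Proof.
move=> hf; have h := hf 1 0 0; rewrite !scale1r addr0 in h.
by apply: (addrI (f 0)); rewrite addr0 -h.
Qed.

Lemma DlinD (D : unitRingType) (M : lmodType D) (f : M -> M) : Dlinear f ->
  forall u v, f (u + v) = f u + f v.
Proof. by move=> hf u v; have := hf 1 u v; rewrite !scale1r. Qed.

Lemma DlinZ (D : unitRingType) (M : lmodType D) (f : M -> M) : Dlinear f ->
  forall a u, f (a *: u) = a *: f u.
Proof. by move=> hf a u; rewrite -[a *: u]addr0 hf Dlin0 // addr0. Qed.

Lemma Dlin_sum (D : unitRingType) (M : lmodType D) (f : M -> M) : Dlinear f ->
  forall (I : Type) (r : seq I) (F : I -> M), f (\sum_(i <- r) F i) = \sum_(i <- r) f (F i).
Proof.
move=> hf I r F; elim: r => [|x r IH]; first by rewrite !big_nil Dlin0.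
by rewrite !big_cons DlinD // IH.
Qed.

Lemma central_closed (D : unitRingType) : division_ring D -> sclosed (@central D).
Proof.
move=> hD.
split.
- by move=> x; rewrite mul0r mulr0.
- by move=> x; rewrite mul1r mulr1.
- by move=> x y hx hy z; rewrite mulrBl mulrBr hx hy.
- by move=> x y hx hy z; rewrite -mulrA hy mulrA hx mulrA.
move=> x hx hx0.
have xU : x \is a GRing.unit by apply: hD hx0.
split => // z.
by rewrite -{1}[z](mulrK xU) -hx -!mulrA mulKr.
Qed.

Lemma true_closed (D : unitRingType) : division_ring D -> sclosed (fun _ : D => True).
Proof. by move=> hD; split => // x _ hx; split => //; apply: hD. Qed.

Lemma cent_sub (D : unitRingType) (M : lmodType D) (phi : M -> M) : Dlinear phi ->
  (centralizer_map phi (fun _ => 0)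
   /\ (forall f g, centralizer_map phi f -> centralizer_map phi g ->
         centralizer_map phi (fun v => f v + g v))
   /\ (forall (k : D) f, central k -> centralizer_map phi f ->
         centralizer_map phi (fun v => k *: f v))).
Proof.
move=> hphi; split; [|split].
- split; first by move=> a u v; rewrite scaler0 addr0.
  by move=> v; rewrite Dlin0.
- move=> f g [hf cf] [hg cg]; split.
    by move=> a u v; rewrite hf hg scalerDr addrACA.
  by move=> v; rewrite cf cg DlinD.
- move=> k f hk [hf cf]; split.
    by move=> a u v; rewrite hf scalerDr !scalerA hk.
  by move=> v; rewrite cf DlinZ.
Qed.

Lemma nth_map_enum (D : unitRingType) n (c : 'I_n -> D) (i : 'I_n) :
  (map c (enum 'I_n))`_i = c i.
Proof. by rewrite (nth_map i) ?size_enum_ord // nth_ord_enum. Qed.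

Lemma sum_split (R : unitRingType) (V : lmodType R) (F : nat -> V) n1 n2 :
  \sum_(p < n1 + n2) F p = \sum_(p < n1) F p + \sum_(r < n2) F (n1 + r)%N.
Proof. by rewrite big_split_ord. Qed.

Lemma main_bound (D : unitRingType) (M : lmodType D) (phi : M -> M) (b : seq D^o)
    (u t : seq M) (s : seq (M -> M)) :
  division_ring D -> Dlinear phi -> nilpotent_map phi ->
  (forall x : D^o, exists c, span_coef (@central D) b x c) ->
  (forall y, phi y = 0 -> exists l, span_coef (fun _ => True) u y l) ->
  lin_indep (fun _ => True) (u ++ t) ->
  (forall x : M, exists c, span_coef (fun _ => True) (u ++ t) x c) ->
  (forall i, (i < size s)%N -> centralizer_map phi (nth (fun _ => 0) s i)) ->
  lin_indep_fun (@central D) s ->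
  (size s <= size u * size (u ++ t) * size b)%N.
Proof.
move=> hD hphi [k hk] hb hker hB hBs hsC hsI.
have hK := central_closed hD.
set B := u ++ t; set m := size B.
pose psi i := nth (fun _ : M => 0 : M) s i.
have [cm hcm] := fchoice (P := fun iq c => span_coef (fun _ => True) B (psi iq.1 B`_(iq.2)) c)
   (fun iq : nat * nat => hBs _).
have [cd hcd] := fchoice (P := fun iqp c => span_coef (@central D) b ((cm (iqp.1.1, iqp.1.2))`_(iqp.2) : D^o) c)
   (fun iqp : nat * nat * nat => hb _).
pose J := prod (prod 'I_(size u) 'I_m) 'I_(size b).
have -> : (size u * m * size b = #|{: J}|)%N by rewrite !card_prod !card_ord.
apply: (rows_le_fin hK (a := fun (i : 'I_(size s)) (j : J) =>
    (cd ((i : nat), (j.1.2 : nat), (j.1.1 : nat)))`_(j.2))).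
  by move=> i j; case: (hcd (i : nat, (j.1.2 : nat), (j.1.1 : nat))) => _ [+ _]; apply.
move=> c hc hsum.
pose Psi v := \sum_(i < size s) c i *: psi i v.
have ha : forall (q : 'I_m) (p : 'I_(size u)), \sum_i c i * (cm (i : nat, q : nat))`_p = 0.
  move=> q p.
  have e : forall i : 'I_(size s), (cm (i:nat, q:nat))`_p
       = \sum_(l < size b) (cd (i:nat, q:nat, p:nat))`_l * b`_l.
    by move=> i; case: (hcd (i:nat, q:nat, p:nat)) => _ [_ ->].
  under eq_bigr do rewrite e mulr_sumr.
  rewrite exchange_big /=; apply: big1 => l _.
  under eq_bigr do rewrite mulrA.
  by rewrite -mulr_suml (hsum ((p, q), l)) mul0r.
pose Z w := exists y : seq D, size y = size t /\ w = \sum_(r < size t) y`_r *: t`_r.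
have hsplit : forall (F : nat -> M), \sum_(p < m) F p
    = \sum_(p < size u) F p + \sum_(r < size t) F (size u + r)%N.
  by move=> F; rewrite -sum_split /m /B size_cat.
have hb2 : forall q : 'I_m, Z (Psi B`_q).
  move=> q.
  have e1 : forall i : 'I_(size s), c i *: psi i B`_q
      = \sum_(p < m) (c i * (cm (i:nat,q:nat))`_p) *: B`_p.
    move=> i; case: (hcm (i:nat, q:nat)) => _ [_ ->].
    by rewrite scaler_sumr; apply: eq_bigr => p _; rewrite scalerA.
  rewrite /Psi; under eq_bigr do rewrite e1.
  rewrite exchange_big /=; under eq_bigr do rewrite -scaler_suml.
  rewrite (hsplit (fun p => (\sum_(i0 < size s) c i0 * (cm (i0:nat, q:nat))`_p) *: B`_p)).
  rewrite big1 ?add0r; last by move=> p _; rewrite (ha q p) scale0r.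
  exists (mkseq (fun r => \sum_i c i * (cm (i:nat, q:nat))`_(size u + r)) (size t)).
  split; first by rewrite size_mkseq.
  apply: eq_bigr => r _; rewrite nth_mkseq //.
  by rewrite nth_cat ltnNge leq_addr /= addKn.
have hZ0 : Z 0.
  exists (nseq (size t) 0); rewrite size_nseq; split => //.
  by rewrite big1 // => r _; rewrite nth_nseq ltn_ord scale0r.
have hZD : forall w1 w2, Z w1 -> Z w2 -> Z (w1 + w2).
  move=> w1 w2 [y1 [s1 ->]] [y2 [s2 ->]].
  exists (mkseq (fun r => y1`_r + y2`_r) (size t)); rewrite size_mkseq; split => //.
  by rewrite -big_split; apply: eq_bigr => r _; rewrite nth_mkseq // scalerDl.
have hZZ : forall a w, Z w -> Z (a *: w).
  move=> a w [y [sy ->]].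
  exists (mkseq (fun r => a * y`_r) (size t)); rewrite size_mkseq; split => //.
  by rewrite scaler_sumr; apply: eq_bigr => r _; rewrite nth_mkseq // scalerA.
have hDl : forall i : 'I_(size s), Dlinear (psi i) by move=> i; case: (hsC i (ltn_ord i)).
have hCm : forall (i : 'I_(size s)) v, psi i (phi v) = phi (psi i v)
  by move=> i; case: (hsC i (ltn_ord i)).
have hPsiv : forall v, Z (Psi v).
  move=> v; case: (hBs v) => x [_ [_ ->]].
  have -> : Psi (\sum_(q < m) x`_q *: B`_q) = \sum_(q < m) x`_q *: Psi B`_q.
    rewrite /Psi; under eq_bigr => i _ do rewrite (Dlin_sum (hDl i)) scaler_sumr.
    rewrite exchange_big /=; apply: eq_bigr => q _.
    rewrite scaler_sumr; apply: eq_bigr => i _.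
    by rewrite (DlinZ (hDl i)) !scalerA hc.
  apply: (big_ind Z hZ0 hZD) => q _; apply: hZZ; exact: hb2.
have hiter : forall j v, iter j phi (Psi v) = Psi (iter j phi v).
  elim=> [//|j IH] v; rewrite !iterS IH /Psi (Dlin_sum hphi).
  by apply: eq_bigr => i _; rewrite (DlinZ hphi) -hCm.
have kerZ : forall y, phi y = 0 -> Z y -> y = 0.
  move=> y hy [yy [hyy hyt]].
  case: (hker y hy) => l [hl [_ hly]].
  have H := hB (l ++ map (fun z => - z) yy).
  have H' : forall i, (i < size (u ++ t))%N -> (l ++ map (fun z => - z) yy)`_i = 0.
    apply: H => //; first by rewrite !size_cat size_map hl hyy.
    rewrite -/B; rewrite (hsplit (fun p => (l ++ [seq - z | z <- yy])`_p *: B`_p)).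
    have -> : \sum_(p < size u) (l ++ [seq - z | z <- yy])`_p *: B`_p = y.
      by rewrite hly; apply: eq_bigr => p _; rewrite /B !nth_cat hl ltn_ord.
    have -> : \sum_(r < size t) (l ++ [seq - z | z <- yy])`_(size u + r) *: B`_(size u + r) = - y.
      rewrite hyt -sumrN; apply: eq_bigr => r _.
      rewrite /B !nth_cat hl ltnNge leq_addr /= addKn (nth_map 0) ?hyy //.
      by rewrite scaleNr.
    by rewrite subrr.
  rewrite hly; apply: big1 => p _.
  by have := H' p; rewrite size_cat nth_cat hl ltn_ord => ->; [rewrite scale0r | apply: ltn_addr].
have hPsi0 : forall v, Psi v = 0.
  move=> v.
  have : forall j, (j <= k)%N -> iter (k - j) phi (Psi v) = 0.
    elim=> [|j IH] hj; first by rewrite subn0 hk.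
    apply: kerZ; last by rewrite hiter; apply: hPsiv.
    rewrite -iterS subnSK //; exact: IH (ltnW hj).
  by move/(_ k (leqnn k)); rewrite subnn.
have := hsI (map c (enum 'I_(size s))).
rewrite size_map size_enum_ord => /(_ erefl).
have H1 : forall i, (i < size s)%N -> central (map c (enum 'I_(size s)))`_i.
  by move=> i hi; rewrite -[i]/(nat_of_ord (Ordinal hi)) nth_map_enum.
move=> /(_ H1) H2 i.
have H3 : forall v, \sum_(i < size s) (map c (enum 'I_(size s)))`_i *: (nth (fun _ => 0) s i) v = 0.
  move=> v; apply: etrans (hPsi0 v); apply: eq_bigr => j _; by rewrite nth_map_enum.
by have := H2 H3 i (ltn_ord i); rewrite nth_map_enum.
Qed.
Unset Implicit Arguments.
Theorem corollary4p7 (D : unitRingType) (M : lmodType D) (phi : M -> M)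
    (dK kD n : nat) :
  division_ring D ->
  has_dim (@central D) (fun _ : D^o => True) dK ->
  has_dim (fun _ : D => True) (fun _ : M => True) n ->
  Dlinear phi -> nilpotent_map phi ->
  has_dim (fun _ : D => True) (fun v : M => phi v = 0) kD ->
  (centralizer_map phi (fun _ => 0)
   /\ (forall f g, centralizer_map phi f -> centralizer_map phi g ->
         centralizer_map phi (fun v => f v + g v))
   /\ (forall (k : D) f, central k -> centralizer_map phi f ->
         centralizer_map phi (fun v => k *: f v)))
  /\
  (exists c : nat, has_dim_fun (@central D) (centralizer_map phi) c
                   /\ (c <= dK * kD * n)%N).
Proof.
move=> hD hdK hn hphi hnil hkD.
split; first exact: cent_sub hphi.
have hK := central_closed hD; have hT := true_closed hD.
have indep0 : forall (V : lmodType D) (S : D -> Prop), lin_indep S ([::] : seq V).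
  by move=> V S c _ _ _ i; rewrite ltn0.
case: hdK => _ hdKb.
have [b [_ [hbi hbs]]] := exists_basis hK hdKb (u := [::]) (fun v (h : v \in [::]) => I) (indep0 _ _).
rewrite cat0s in hbi hbs.
have hbsz : (size b <= dK)%N by apply: hdKb hbi.
case: hkD => [[u [hu [huk hui]]] hkb].
have hker : forall y, phi y = 0 -> exists l, span_coef (fun _ => True) u y l.
  move=> y hy; apply: (dep_span hT hui) => H.
  have hin : forall v, v \in rcons u y -> phi v = 0.
    by move=> v; rewrite mem_rcons inE => /orP [/eqP -> | ]; [exact: hy | exact: huk].
  by have := hkb (rcons u y) hin H; rewrite size_rcons hu ltnn.
case: hn => _ hnb.
have [t [_ [hBi hBs]]] := exists_basis hT hnb (u := u) (fun _ _ => I) hui.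
have hsz : (size (u ++ t) <= n)%N by apply: hnb hBi.
pose P k := exists s : seq (M -> M), size s = k /\
  (forall i, (i < size s)%N -> centralizer_map phi (nth (fun _ => 0) s i)) /\
  lin_indep_fun (@central D) s.
have hbd : forall k, P k -> (k <= dK * kD * n)%N.
  move=> k [s [<- [hs hsi]]].
  have := main_bound hD hphi hnil (fun x => hbs x I) hker hBi (fun x => hBs x I) hs hsi; rewrite hu => h.
  apply: leq_trans h _.
  rewrite mulnC -!mulnA; apply: leq_mul => //; apply: leq_mul => //.
have P0 : P 0%N.
  by exists [::]; split => //; split => // c _ _ _ i; rewrite ltn0.
have [c [[s [hs1 [hs2 hs3]]] hmax]] := max_exists P0 hbd.
exists c; split; last by apply: hbd; exists s.
split; first by exists s.
by move=> s' h1 h2; apply: hmax; exists s'.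
Qed.
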